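(* If $f\in{\rm elh}(\mathbb{C})$ is a polynomial, then the map $L_f:{\rm elh}(\mathbb{C})\to{\rm elh}(\mathbb{C})$, $L_f(g)=f\circ g$, is injective.
   Context: ${\rm elh}(\mathbb{C})$ denotes the set of entire functions with nowhere vanishing derivative and derivative $1$ at $0$. *)

(* Defs.v *)
From Stdlib Require Import Reals.
From Coquelicot Require Export Coquelicot.

Definition elh (f : C -> C) : Prop :=
  exists f' : C -> C,
    (forall z : C, is_derive f z (f' z)) /\
    (forall z : C, f' z <> (RtoC 0)) /\
    f' (RtoC 0) = (RtoC 1).

Definition is_polynomial (f : C -> C) : Prop :=
  exists (n : nat) (a : nat -> C),
    forall z : C, f z = sum_n (fun k => mult (a k) (pow_n z k)) n.

(* Main.v *)
Require Import Defs.
From mathcomp Require Import all_boot all_algebra.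
From mathcomp Require Import complex.
From mathcomp Require Import Rstruct.
From Stdlib Require Import FunctionalExtensionality.
From Coquelicot Require Import Coquelicot.
Import GRing.Theory Num.Theory.
Local Open Scope ring_scope.

Lemma nozero_const (F : closedFieldType) (n : nat) (c : nat -> F) :
 (forall x, \sum_(j < n) c j * x ^+ j != 0) -> forall j, (0 < j < n)%N -> c j = 0.
Proof.
move=> H j /andP[j0 jn].
pose p := \poly_(i < n) c i.
have : size p == 1%N.
  apply/negPn/negP => /closed_rootP [x].
  by rewrite /root horner_poly (negbTE (H x)).
move/eqP=> sp.
have := coef_poly n c j; rewrite jn => <-.
by apply: nth_default; rewrite sp.
Qed.

Lemma key (F : numClosedFieldType) (n : nat) (A : nat -> F) :
  (forall x, \sum_(k < n.+1) A k * (k%:R * x ^+ k.-1) != 0) ->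
  \sum_(k < n.+1) A k * (k%:R * 0 ^+ k.-1) = 1 ->
  forall x, \sum_(k < n.+1) A k * x ^+ k = A 0%N + x.
Proof.
pose c j := A j.+1 * j.+1%:R.
have E : forall x, \sum_(k < n.+1) A k * (k%:R * x ^+ k.-1) = \sum_(j < n) c j * x ^+ j.
  move=> x; rewrite big_ord_recl mul0r mulr0 add0r.
  by apply: eq_bigr => i _; rewrite /c /bump /= mulrA.
move=> H1 H0.
have Hc : forall j, (0 < j < n)%N -> c j = 0.
  by apply: nozero_const => x; rewrite -E.
have Hj : forall j, (1 < j <= n)%N -> A j = 0.
  case=> [//|j] /andP[j1 jn].
  have jn' : (0 < j < n)%N by rewrite -ltnS j1.
  by have /eqP := Hc j jn'; rewrite /c mulf_eq0 pnatr_eq0 orbF => /eqP.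
move: H0; rewrite E.
case: n H1 E Hc Hj => [|m] H1 E Hc Hj; first by rewrite big_ord0 => /eqP; rewrite eq_sym oner_eq0.
rewrite big_ord_recl big1 ?addr0 ?expr0 ?mulr1; last first.
  by move=> i _; rewrite lift0 expr0n /= mulr0.
rewrite /c mulr1 => A1 x.
rewrite big_ord_recl big_ord_recl big1 ?addr0.
  by rewrite lift0 expr0 mulr1 expr1 A1 mul1r.
move=> i _; rewrite Hj ?mul0r // !lift0 /=.
exact: ltn_ord.
Qed.

Definition phi (z : C) : complex Rdefinitions.R := Complex z.1 z.2.

Lemma phi_plus (x y : C) : phi (plus x y) = (phi x + phi y)%R.
Proof. case: x => a b; case: y => c d. reflexivity. Qed.
Lemma phi_mult (x y : C) : phi (mult x y) = (phi x * phi y)%R.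
Proof. case: x => a b; case: y => c d. reflexivity. Qed.
Lemma phi_zero : phi zero = 0%R.
Proof. reflexivity. Qed.
Lemma phi_one : phi one = 1%R.
Proof. reflexivity. Qed.
Lemma phi_inj : injective phi.
Proof. by case=> a b [c d] [-> ->]. Qed.
Lemma phi_pow (z : C) k : phi (pow_n z k) = (phi z ^+ k)%R.
Proof. elim: k => [|k IH] /=; first exact: phi_one. by rewrite phi_mult IH exprS. Qed.
Lemma phi_nat k : phi (@nat_to_ring C_Ring k) = (k%:R)%R.
Proof.
elim: k => [|k IH]; first by rewrite nat_to_ring_O.
by rewrite nat_to_ring_Sn phi_plus IH phi_one -natr1.
Qed.
Lemma phi_sum (F : nat -> C) m : phi (sum_n F m) = (\sum_(k < m.+1) phi (F k))%R.
Proof.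
elim: m => [|m IH]; first by rewrite sum_O big_ord1.
by rewrite sum_Sn phi_plus IH [in RHS]big_ord_recr.
Qed.
Lemma phi_surj (x : complex Rdefinitions.R) : phi (complex.Re x, complex.Im x) = x.
Proof. by case: x. Qed.

Lemma is_derive_term (a : C) k (z : C) :
  @is_derive C_AbsRing C_NormedModule (fun y : C => mult a (pow_n y k)) z
            (mult a (mult (nat_to_ring k) (pow_n z (Nat.pred k)))).
Proof.
have H := @is_derive_scal_l C_AbsRing C_NormedModule (fun y => pow_n y k) z _ a
  (filterdiff_pow_n z k Cmult_comm).
have E : forall u : C, @scal C_AbsRing C_NormedModule u a = mult a u.
  move=> u; exact: Cmult_comm.
rewrite E in H.
apply: (is_derive_ext _ _ _ _ _ H) => t; exact: E.
Qed.

Lemma is_derive_poly (a : nat -> C) (n : nat) (z : C) :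
  @is_derive C_AbsRing C_NormedModule (fun y : C => sum_n (fun k => mult (a k) (pow_n y k)) n) z
   (sum_n (fun k => mult (a k) (mult (nat_to_ring k) (pow_n z (Nat.pred k)))) n).
Proof.
elim: n => [|n IH].
  rewrite sum_O; apply: (is_derive_ext (fun y : C => mult (a 0%N) (pow_n y 0))).
    by move=> t; rewrite sum_O.
  exact: is_derive_term.
rewrite sum_Sn.
apply: (is_derive_ext (fun y : C => plus (sum_n (fun k => mult (a k) (pow_n y k)) n)
                                          (mult (a n.+1) (pow_n y n.+1)))).
  by move=> t; rewrite sum_Sn.
apply: is_derive_plus => //; exact: is_derive_term.
Qed.

Theorem proposition3p21 (f : C -> C) :
  elh f -> is_polynomial f ->
  forall g h : C -> C, elh g -> elh h ->
    (fun z => f (g z)) = (fun z => f (h z)) -> g = h.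
Proof.
move=> [f' [Hd [Hnz H0]]] [n [a Hf]] g h _ _ Hgh.
have Df : forall z, f' z = sum_n (fun k => mult (a k) (mult (nat_to_ring k) (pow_n z (Nat.pred k)))) n.
  move=> z; rewrite -(is_C_derive_unique _ _ _ (Hd z)).
  apply: is_C_derive_unique.
  apply: (is_derive_ext (fun y : C => sum_n (fun k => mult (a k) (pow_n y k)) n)).
    by move=> t; rewrite Hf.
  exact: is_derive_poly.
have Hk := @key _ n (fun k => phi (a k)).
have Hlin : forall x, (\sum_(k < n.+1) phi (a k) * x ^+ k = phi (a 0%N) + x)%R.
  apply: Hk.
    move=> x; apply/eqP => E.
    apply: (Hnz (complex.Re x, complex.Im x)); apply: phi_inj.
    rewrite Df phi_sum; transitivity (\sum_(k < n.+1) phi (a k) * (k%:R * x ^+ k.-1))%R; last by rewrite E.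
    apply: eq_bigr => i _.
    by rewrite phi_mult phi_mult phi_nat phi_pow phi_surj.
  transitivity (phi (f' (RtoC 0))); last by rewrite H0.
  rewrite Df phi_sum; apply: eq_bigr => i _.
  by rewrite phi_mult phi_mult phi_nat phi_pow.
have Pf : forall z, phi (f z) = (phi (a 0%N) + phi z)%R.
  move=> z; rewrite Hf phi_sum -Hlin; apply: eq_bigr => i _.
  by rewrite phi_mult phi_pow.
apply: functional_extensionality => z.
have := f_equal (fun F => F z) Hgh => /= /(f_equal phi).
by rewrite !Pf => /addrI /phi_inj.
Qed.
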